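(* Let $H_1,H_2$ be complex Hilbert spaces. The set of densely defined closed minimum attaining operators from $H_1$ to $H_2$ is dense, with respect to the gap topology, in the set of all densely defined closed operators from $H_1$ to $H_2$.
   Context: Hilbert spaces are complex and infinite dimensional. For a densely defined closed operator $A$ with domain $D(A)$, $m(A)=\inf\{\|Ax\|: x\in D(A),\ \|x\|=1\}$, and $A$ is minimum attaining if there exists $x_0\in D(A)$, $\|x_0\|=1$, with $\|Ax_0\|=m(A)$. The gap topology is the topology induced by the metric $\theta(A,B)=\|P_{G(A)}-P_{G(B)}\|$, where $G(A)=\{(Ax,x):x\in D(A)\}$ is the (closed) graph and $P_M$ the orthogonal projection onto $M$. *)

(* Defs.v *)
From HB Require Import structures.
From mathcomp Require Import all_boot all_order all_algebra.
From mathcomp Require Import boolp classical_sets reals.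
From mathcomp Require Import complex.
From Stdlib Require Import ClassicalEpsilon.
Set Implicit Arguments. Unset Strict Implicit. Unset Printing Implicit Defensive.
Import Order.TTheory GRing.Theory Num.Theory.
Local Open Scope ring_scope.
Local Open Scope classical_set_scope.

Section Hilbert.
Variable R : realType.
Local Notation C := (R[i]).

Definition is_inner_product (V : lmodType C) (ip : V -> V -> C) : Prop :=
  [/\ (forall (a : C) (x y z : V), ip (a *: x + y) z = a * ip x z + ip y z),
      (forall x y : V, ip y x = conjc (ip x y)),
      (forall x : V, 0 <= ip x x) &
      (forall x : V, ip x x = 0 -> x = 0)].

Definition ipnorm (V : lmodType C) (ip : V -> V -> C) (x : V) : R :=
  Num.sqrt (@complex.Re R (ip x x)).

Definition cauchy_seq (V : lmodType C) (ip : V -> V -> C) (u : nat -> V) : Prop :=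
  forall eps : R, 0 < eps -> exists N : nat, forall m n : nat,
    (N <= m)%N -> (N <= n)%N -> ipnorm ip (u m - u n) < eps.

Definition converges_to (V : lmodType C) (ip : V -> V -> C) (u : nat -> V) (l : V) : Prop :=
  forall eps : R, 0 < eps -> exists N : nat, forall n : nat,
    (N <= n)%N -> ipnorm ip (u n - l) < eps.

Definition infinite_dimensional (V : lmodType C) (ip : V -> V -> C) : Prop :=
  forall n : nat, exists e : nat -> V, forall i j : nat, (i < n)%N -> (j < n)%N ->
    ip (e i) (e j) = (i == j)%:R.

Definition is_hilbert (V : lmodType C) (ip : V -> V -> C) : Prop :=
  [/\ is_inner_product ip,
      (forall u : nat -> V, cauchy_seq ip u -> exists l, converges_to ip u l) &
      infinite_dimensional ip].

(** Operators from V1 to V2: a domain and a map (only its values on the domain matter). *)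
Record op (V1 V2 : lmodType C) := Op { dom : set V1; app : V1 -> V2 }.

Definition linear_op (V1 V2 : lmodType C) (A : op V1 V2) : Prop :=
  [/\ dom A 0,
      (forall (a : C) x y, dom A x -> dom A y -> dom A (a *: x + y)) &
      (forall (a : C) x y, dom A x -> dom A y ->
         app A (a *: x + y) = a *: app A x + app A y)].

Definition densely_defined (V1 V2 : lmodType C) (ip1 : V1 -> V1 -> C) (A : op V1 V2) : Prop :=
  linear_op A /\
  forall (x : V1) (eps : R), 0 < eps -> exists d, dom A d /\ ipnorm ip1 (x - d) < eps.

Definition closed_op (V1 V2 : lmodType C) (ip1 : V1 -> V1 -> C) (ip2 : V2 -> V2 -> C)
  (A : op V1 V2) : Prop :=
  forall (u : nat -> V1) (x : V1) (y : V2),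
    (forall n, dom A (u n)) -> converges_to ip1 u x -> converges_to ip2 (app A \o u) y ->
    dom A x /\ app A x = y.

Definition min_modulus (V1 V2 : lmodType C) (ip1 : V1 -> V1 -> C) (ip2 : V2 -> V2 -> C)
  (A : op V1 V2) : R :=
  inf [set r | exists x, dom A x /\ ipnorm ip1 x = 1 /\ r = ipnorm ip2 (app A x)].

Definition minimum_attaining (V1 V2 : lmodType C) (ip1 : V1 -> V1 -> C) (ip2 : V2 -> V2 -> C)
  (A : op V1 V2) : Prop :=
  exists x0, dom A x0 /\ ipnorm ip1 x0 = 1 /\ ipnorm ip2 (app A x0) = min_modulus ip1 ip2 A.

Definition ipsum (V1 V2 : lmodType C) (ip1 : V1 -> V1 -> C) (ip2 : V2 -> V2 -> C)
  (z w : V2 * V1) : C := ip2 z.1 w.1 + ip1 z.2 w.2.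

Definition graph (V1 V2 : lmodType C) (A : op V1 V2) : set (V2 * V1) :=
  [set z | exists x, dom A x /\ z = (app A x, x)].

Definition is_orth_proj (W : lmodType C) (ip : W -> W -> C) (M : set W) (P : W -> W) : Prop :=
  forall z, M (P z) /\ forall w, M w -> ip (z - P z) w = 0.

Definition orth_proj (W : lmodType C) (ip : W -> W -> C) (M : set W) : W -> W :=
  epsilon (inhabits id) (is_orth_proj ip M).

Definition gap (V1 V2 : lmodType C) (ip1 : V1 -> V1 -> C) (ip2 : V2 -> V2 -> C)
  (A B : op V1 V2) : R :=
  let ip := ipsum ip1 ip2 in
  let PA := orth_proj ip (graph A) in
  let PB := orth_proj ip (graph B) in
  sup [set r | exists z, ipnorm ip z <= 1 /\ r = ipnorm ip (PA z - PB z)].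

End Hilbert.

(* Main.v *)
Require Import Defs.
From HB Require Import structures.
From mathcomp Require Import all_boot all_order all_algebra.
From mathcomp Require Import boolp classical_sets reals.
From mathcomp Require Import complex.
From mathcomp Require Import ring lra.
From Stdlib Require Import ClassicalEpsilon.
Import Order.TTheory GRing.Theory Num.Theory.
Local Open Scope ring_scope.

Module PP1.
Local Open Scope ring_scope.
Local Open Scope complex_scope.
Set Implicit Arguments. Unset Strict Implicit.

Section Cplx.
Variable R : realType.
Local Notation Re := (@complex.Re R).
Local Notation Im := (@complex.Im R).
Implicit Types (x y : R[i]).
Lemma cReD x y : Re (x + y) = Re x + Re y. Proof. by case: x => ? ?; case: y => ? ?; reflexivity. Qed.
Lemma cImD x y : Im (x + y) = Im x + Im y. Proof. by case: x => ? ?; case: y => ? ?; reflexivity. Qed.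
Lemma cReN x : Re (- x) = - Re x. Proof. by case: x => ? ?; reflexivity. Qed.
Lemma cImN x : Im (- x) = - Im x. Proof. by case: x => ? ?; reflexivity. Qed.
Lemma cReM x y : Re (x * y) = Re x * Re y - Im x * Im y. Proof. by case: x => ? ?; case: y => ? ?; reflexivity. Qed.
Lemma cImM x y : Im (x * y) = Re x * Im y + Im x * Re y. Proof. by case: x => ? ?; case: y => ? ?; reflexivity. Qed.
Lemma cReJ x : Re (conjc x) = Re x. Proof. by case: x => ? ?; reflexivity. Qed.
Lemma cImJ x : Im (conjc x) = - Im x. Proof. by case: x => ? ?; reflexivity. Qed.
Lemma cReC (a : R) : Re (a%:C) = a. Proof. by []. Qed.
Lemma cImC (a : R) : Im (a%:C) = 0. Proof. by []. Qed.
Lemma cRe0 : Re (0 : R[i]) = 0. Proof. by []. Qed.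
Lemma cIm0 : Im (0 : R[i]) = 0. Proof. by []. Qed.
Lemma cRe1 : Re (1 : R[i]) = 1. Proof. by []. Qed.
Lemma cIm1 : Im (1 : R[i]) = 0. Proof. by []. Qed.
Lemma c_eq x y : Re x = Re y -> Im x = Im y -> x = y.
Proof. by case: x; case: y => /= ? ? ? ? -> ->. Qed.
Lemma cReB x y : Re (x - y) = Re x - Re y. Proof. by rewrite cReD cReN. Qed.
Lemma cImB x y : Im (x - y) = Im x - Im y. Proof. by rewrite cImD cImN. Qed.
Lemma cge0 x : 0 <= x -> Im x = 0 /\ 0 <= Re x.
Proof. by rewrite lecE => /andP[/eqP h1 h2]; split. Qed.

Lemma disc (a b c : R) : 0 <= c ->
  (forall t : R, 0 <= a + 2 * t * b + t ^+ 2 * c) -> b ^+ 2 <= a * c.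
Proof.
move=> c0 H.
have a0 : 0 <= a by have := H 0; rewrite mulr0 mul0r expr0n /= mul0r !addr0.
have [c_gt0|] := ltrP 0 c.
  have := H (- b / c).
  set t := - b / c => h.
  have ht : t * c = - b by rewrite /t mulrAC -mulrA divff ?mulr1 // gt_eqF.
  have : 0 <= a * c + 2 * (t * c) * b + (t * c) ^+ 2.
    have -> : a * c + 2 * (t * c) * b + (t * c) ^+ 2 = (a + 2 * t * b + t ^+ 2 * c) * c.
      by ring.
    by rewrite mulr_ge0 // ltW.
  rewrite ht. nra.
move=> cle0; have c0' : c = 0 by apply/eqP; rewrite eq_le cle0 c0.
subst c; rewrite mulr0.
have [b0|bn0] := eqVneq b 0; first by rewrite b0 expr0n.
have := H (- (a + 1) / (2 * b)).
have -> : a + 2 * (- (a + 1) / (2 * b)) * b + (- (a + 1) / (2 * b)) ^+ 2 * 0 = -1.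
  by field.
by rewrite ler0N1.
Qed.
End Cplx.

End PP1.
Import PP1.

Module PP2.
Local Open Scope ring_scope.
Local Open Scope complex_scope.
Set Implicit Arguments. Unset Strict Implicit.

Section IP.
Variable R : realType.
Local Notation Re := (@complex.Re R).
Local Notation Im := (@complex.Im R).
Variables (V : lmodType R[i]) (ip : V -> V -> R[i]).
Hypothesis Hip : is_inner_product ip.
Implicit Types (x y z : V).

Lemma ipDZl (a : R[i]) x y z : ip (a *: x + y) z = a * ip x z + ip y z.
Proof. by case: Hip => h _ _ _; apply: h. Qed.
Lemma ipC x y : ip y x = conjc (ip x y). Proof. by case: Hip => _ h _ _; apply: h. Qed.
Lemma ip_ge0 x : 0 <= ip x x. Proof. by case: Hip => _ _ h _; apply: h. Qed.
Lemma ip_def x : ip x x = 0 -> x = 0. Proof. by case: Hip => _ _ _ h; apply: h. Qed.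

Lemma ip0l z : ip 0 z = 0.
Proof.
have := ipDZl 1 0 0 z; rewrite scaler0 addr0 mul1r => h.
have : ip 0 z + 0 = ip 0 z + ip 0 z by rewrite addr0 -h.
by move/addrI.
Qed.
Lemma ipDl x y z : ip (x + y) z = ip x z + ip y z.
Proof. by rewrite -[x in LHS]scale1r ipDZl mul1r. Qed.
Lemma ipZl (a : R[i]) x z : ip (a *: x) z = a * ip x z.
Proof. by rewrite -[a *: x]addr0 ipDZl ip0l addr0. Qed.
Lemma ipNl x z : ip (- x) z = - ip x z.
Proof. by rewrite -scaleN1r ipZl mulN1r. Qed.
Lemma ipBl x y z : ip (x - y) z = ip x z - ip y z.
Proof. by rewrite ipDl ipNl. Qed.
Lemma ip0r z : ip z 0 = 0.
Proof. by rewrite ipC ip0l; exact: conjc0. Qed.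
Lemma ipDr x y z : ip z (x + y) = ip z x + ip z y.
Proof. by rewrite (ipC (x+y) z) (ipC x z) (ipC y z) ipDl rmorphD. Qed.
Lemma ipZr (a : R[i]) x z : ip z (a *: x) = conjc a * ip z x.
Proof. by rewrite (ipC (a*:x) z) (ipC x z) ipZl rmorphM. Qed.
Lemma ipNr x z : ip z (- x) = - ip z x.
Proof. by rewrite (ipC (-x) z) (ipC x z) ipNl rmorphN. Qed.
Lemma ipBr x y z : ip z (x - y) = ip z x - ip z y.
Proof. by rewrite ipDr ipNr. Qed.

Definition n2 x := Re (ip x x).
Lemma ipxx x : ip x x = (n2 x)%:C.
Proof. have [h1 h2] := cge0 (ip_ge0 x). by apply: c_eq; rewrite ?cReC ?cImC. Qed.
Lemma n2_ge0 x : 0 <= n2 x. Proof. by have [] := cge0 (ip_ge0 x). Qed.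
Lemma n2_eq0 x : n2 x = 0 -> x = 0.
Proof. by move=> h; apply: ip_def; rewrite ipxx h. Qed.
Lemma n20 : n2 0 = 0. Proof. by rewrite /n2 ip0l. Qed.
Lemma Re_ipC x y : Re (ip y x) = Re (ip x y). Proof. by rewrite ipC cReJ. Qed.
Lemma n2D x y : n2 (x + y) = n2 x + n2 y + 2 * Re (ip x y).
Proof. rewrite /n2 ipDl !ipDr !cReD (Re_ipC x y); ring. Qed.
Lemma n2B x y : n2 (x - y) = n2 x + n2 y - 2 * Re (ip x y).
Proof. rewrite /n2 ipBl !ipBr !cReB ?cReN (Re_ipC x y); ring. Qed.
Lemma n2Z (a : R[i]) x : n2 (a *: x) = (Re a ^+ 2 + Im a ^+ 2) * n2 x.
Proof.
rewrite /n2 ipZl ipZr ipxx !cReM cImM cReJ cImJ cReC cImC; ring.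
Qed.
Lemma n2N x : n2 (- x) = n2 x.
Proof. by rewrite -scaleN1r n2Z cReN cImN cRe1 cIm1; rewrite /=; ring. Qed.
Lemma n2R (t : R) x : n2 (t%:C *: x) = t ^+ 2 * n2 x.
Proof. by rewrite n2Z cReC cImC expr0n /= addr0. Qed.
Lemma Re_ipRr (t : R) x y : Re (ip x (t%:C *: y)) = t * Re (ip x y).
Proof. rewrite ipZr cReM cReJ cImJ cReC cImC; ring. Qed.

Lemma CS_Re x y : Re (ip x y) ^+ 2 <= n2 x * n2 y.
Proof.
apply: disc; first exact: n2_ge0.
move=> t; have := n2_ge0 (x + t%:C *: y).
by rewrite n2D n2R Re_ipRr; lra.
Qed.

Lemma CS x y : Re (ip x y) ^+ 2 + Im (ip x y) ^+ 2 <= n2 x * n2 y.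
Proof.
set z := ip x y; set s := Re z ^+ 2 + Im z ^+ 2.
have s0 : 0 <= s by rewrite /s addr_ge0 // sqr_ge0.
have := CS_Re x (z *: y).
have -> : Re (ip x (z *: y)) = s by rewrite ipZr cReM cReJ cImJ /s -/z; ring.
rewrite n2Z -/s.
have [->|sp] := eqVneq s 0; first by rewrite mulr_ge0 ?n2_ge0.
have sp' : 0 < s by rewrite lt_def sp s0.
move=> h.
have : s * s <= s * (n2 x * n2 y) by rewrite -expr2; lra.
by rewrite ler_pM2l.
Qed.

Local Notation nr := (ipnorm ip).
Lemma nrE x : nr x = Num.sqrt (n2 x). Proof. by []. Qed.
Lemma nr_ge0 x : 0 <= nr x. Proof. exact: sqrtr_ge0. Qed.
Lemma nr_sq x : nr x ^+ 2 = n2 x. Proof. by rewrite sqr_sqrtr // n2_ge0. Qed.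
Lemma nr0 : nr 0 = 0. Proof. by rewrite nrE n20 sqrtr0. Qed.
Lemma nr_eq0 x : nr x = 0 -> x = 0.
Proof. by move=> h; apply: n2_eq0; rewrite -nr_sq h expr0n. Qed.

Lemma sq_le (a b : R) : 0 <= a -> 0 <= b -> a ^+ 2 <= b ^+ 2 -> a <= b.
Proof. by move=> a0 b0; rewrite ler_sqr // nnegrE. Qed.
Lemma sq_lt (a b : R) : 0 <= a -> 0 <= b -> a ^+ 2 < b ^+ 2 -> a < b.
Proof. by move=> a0 b0; rewrite ltr_sqr // nnegrE. Qed.

Lemma Re_ip_le x y : Re (ip x y) <= nr x * nr y.
Proof.
have := CS_Re x y; rewrite -!nr_sq => h.
have h0 := nr_ge0 x; have h1 := nr_ge0 y.
have : `|Re (ip x y)| <= nr x * nr y.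
  apply: sq_le; [exact: normr_ge0|exact: mulr_ge0|].
  by rewrite real_normK ?num_real // exprMn.
by apply: le_trans; exact: ler_norm.
Qed.
Lemma abs_ip_le x y : Num.sqrt (Re (ip x y) ^+ 2 + Im (ip x y) ^+ 2) <= nr x * nr y.
Proof.
apply: sq_le; [exact: sqrtr_ge0|exact: mulr_ge0 (nr_ge0 _) (nr_ge0 _)|].
rewrite sqr_sqrtr ?addr_ge0 ?sqr_ge0 // exprMn !nr_sq; exact: CS.
Qed.

Lemma nrD x y : nr (x + y) <= nr x + nr y.
Proof.
apply: sq_le; [exact: nr_ge0|exact: addr_ge0 (nr_ge0 _) (nr_ge0 _)|].
rewrite nr_sq n2D -!nr_sq; have := Re_ip_le x y; lra.
Qed.
Lemma nrN x : nr (- x) = nr x. Proof. by rewrite !nrE n2N. Qed.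
Lemma nrB_sym x y : nr (x - y) = nr (y - x). Proof. by rewrite -nrN opprB. Qed.
Lemma nrZ (a : R[i]) x : nr (a *: x) = Num.sqrt (Re a ^+ 2 + Im a ^+ 2) * nr x.
Proof. by rewrite !nrE n2Z sqrtrM // addr_ge0 ?sqr_ge0. Qed.
Lemma nrR (t : R) x : 0 <= t -> nr (t%:C *: x) = t * nr x.
Proof. by move=> t0; rewrite nrE n2R sqrtrM ?sqr_ge0 // sqrtr_sqr ger0_norm. Qed.
Lemma nrB x y : nr (x - y) <= nr x + nr y.
Proof. by apply: le_trans (nrD _ _) _; rewrite nrN. Qed.
Lemma nr_tri x y z : nr (x - z) <= nr (x - y) + nr (y - z).
Proof. by apply: le_trans (nrD _ _); rewrite addrA subrK. Qed.

Lemma nr_rank1 x e v : nr (ip x e *: v) <= nr x * nr e * nr v.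
Proof. by rewrite nrZ ler_wpM2r ?nr_ge0 // abs_ip_le. Qed.

End IP.

End PP2.
Import PP2.

Module PP3.
Local Open Scope ring_scope.
Local Open Scope complex_scope.
Local Open Scope classical_set_scope.
Set Implicit Arguments. Unset Strict Implicit.

Lemma le_eps (R : realType) (x d : R) : (forall e, 0 < e -> x < d + e) -> x <= d.
Proof.
move=> h; rewrite leNgt; apply/negP => dx.
have := h (x - d); rewrite subr_gt0 => /(_ dx); rewrite addrC subrK ltxx //.
Qed.

Lemma small_inv (R : realType) (x : R) : 0 < x ->
  exists N : nat, forall n : nat, (N <= n)%N -> (n.+1%:R)^-1 < x.
Proof.
move=> x0; exists (Num.Def.archi_bound x^-1) => n hn.
have xi : 0 <= x^-1 by rewrite invr_ge0 ltW.
have h1 := archi_boundP xi.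
have h2 : (Num.Def.archi_bound x^-1)%:R <= (n.+1)%:R :> R by rewrite ler_nat; apply: leq_trans hn _.
have h3 : x^-1 < n.+1%:R by apply: lt_le_trans h2.
rewrite -(invrK x) ltf_pV2 // ?posrE ?invr_gt0 //.
Qed.

Section Proj.
Variable R : realType.
Local Notation Re := (@complex.Re R).
Local Notation Im := (@complex.Im R).
Variables (V : lmodType R[i]) (ip : V -> V -> R[i]).
Hypothesis Hip : is_inner_product ip.
Implicit Types (x y z : V).
Local Notation nr := (ipnorm ip).
Local Notation n2 := (n2 ip).

Lemma conv_cauchy u l : converges_to ip u l -> cauchy_seq ip u.
Proof.
move=> h e e0; have [N hN] := h (e / 2) (divr_gt0 e0 (ltr0Sn _ 1)).
exists N => m n hm hn; apply: le_lt_trans (nr_tri Hip _ l _) _.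
rewrite (nrB_sym Hip l); have := hN _ hm; have := hN _ hn; idtac; lra.
Qed.

Lemma conv_add u w x y : converges_to ip u x -> converges_to ip w y ->
  converges_to ip (fun n => u n + w n) (x + y).
Proof.
move=> hu hw e e0; have [N1 h1] := hu (e / 2) (divr_gt0 e0 (ltr0Sn _ 1)).
have [N2 h2] := hw (e / 2) (divr_gt0 e0 (ltr0Sn _ 1)).
exists (maxn N1 N2) => n hn.
have := h1 n (leq_trans (leq_maxl _ _) hn); have := h2 n (leq_trans (leq_maxr _ _) hn).
have -> : u n + w n - (x + y) = (u n - x) + (w n - y) by rewrite opprD addrACA.
have := nrD Hip (u n - x) (w n - y); lra.
Qed.

Lemma conv_opp u x : converges_to ip u x -> converges_to ip (fun n => - u n) (- x).
Proof. by move=> hu e e0; have [N h] := hu e e0; exists N => n /h; rewrite -opprD nrN. Qed.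

Lemma conv_sub u w x y : converges_to ip u x -> converges_to ip w y ->
  converges_to ip (fun n => u n - w n) (x - y).
Proof. by move=> hu hw; apply: conv_add hu (conv_opp hw). Qed.

Lemma abs0 (a b : R) : (forall e, 0 < e -> Num.sqrt (a ^+ 2 + b ^+ 2) <= e) -> a = 0 /\ b = 0.
Proof.
move=> h.
have s0 : Num.sqrt (a ^+ 2 + b ^+ 2) <= 0.
  by apply: le_eps => e e0; rewrite add0r; apply: le_lt_trans (h (e/2) (divr_gt0 e0 (ltr0Sn _ 1))) _; lra.
have : a ^+ 2 + b ^+ 2 <= 0 by rewrite -sqrtr_eq0 eq_le s0 sqrtr_ge0.
move=> h2; split; nra.
Qed.

Lemma conv_ip0 u x e : converges_to ip u x -> (forall n, ip (u n) e = 0) -> ip x e = 0.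
Proof.
move=> hu h0.
suff [h1 h2] : Re (ip x e) = 0 /\ Im (ip x e) = 0 by apply: c_eq.
apply: abs0 => eps eps0.
have [k [k0 hk]] : exists k : R, 0 < k /\ nr e <= k.
  by exists (nr e + 1); split; [have := nr_ge0 ip e; lra|lra].
have [N hN] := hu (eps / k) (divr_gt0 eps0 k0).
have hxe : ip x e = - ip (u N - x) e by rewrite ipBl // h0 sub0r opprK.
have := abs_ip_le Hip (u N - x) e.
rewrite hxe cReN cImN !sqrrN => h.
apply: (le_trans h).
have hl := hN N (leqnn N).
have : nr (u N - x) * nr e <= eps / k * k.
  by apply: ler_pM; rewrite ?nr_ge0 // ltW.
by rewrite divfK ?gt_eqF.
Qed.

Definition subspace (M : set V) := M 0 /\ (forall a x y, M x -> M y -> M (a *: x + y)).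
Definition seq_closed (M : set V) :=
  forall u x, (forall n, M (u n)) -> converges_to ip u x -> M x.

Variable M : set V.
Hypothesis HM : subspace M.

Lemma M0 : M 0. Proof. by case: HM. Qed.
Lemma MD x y : M x -> M y -> M (x + y).
Proof. by case: HM => _ h hx hy; rewrite -[x]scale1r; apply: h. Qed.
Lemma MZ a x : M x -> M (a *: x).
Proof. by case: HM => h0 h hx; rewrite -[_ *: _]addr0; apply: h. Qed.
Lemma MN x : M x -> M (- x).
Proof. by move=> hx; rewrite -scaleN1r; apply: MZ. Qed.
Lemma MB x y : M x -> M y -> M (x - y).
Proof. by move=> hx hy; apply: MD hx (MN hy). Qed.

Hypothesis complete : forall u, cauchy_seq ip u -> exists l, converges_to ip u l.
Hypothesis HMc : seq_closed M.

Lemma proj_exists z : exists p, M p /\ forall w, M w -> ip (z - p) w = 0.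
Proof.
pose S := [set r | exists m, M m /\ r = nr (z - m)].
have S0 : S (nr (z - 0)) by exists 0; split => //; exact: M0.
have Slb : lbound S (0:R) by move=> r [m [_ hr]]; rewrite hr; exact: nr_ge0.
have hinf : has_inf S by split; [exists (nr (z - 0))|exists 0].
set d := inf S.
have d0 : 0 <= d by apply: lb_le_inf => //; exists (nr (z - 0)).
have dle : forall m, M m -> d <= nr (z - m).
  by move=> m hm; apply: (ge_inf (proj2 hinf)); exists m.
have : forall n : nat, exists m, M m /\ nr (z - m) < d + (n.+1%:R)^-1.
  move=> n; have hpos : 0 < (n.+1%:R)^-1 :> R by rewrite invr_gt0 ltr0Sn.
  have [r [m [hm ->]] hr] := inf_adherent hpos hinf.
  by exists m.
move=> /choice [ms hms].
have e_le1 : forall n : nat, (n.+1%:R)^-1 <= (1 : R).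
  by move=> n; rewrite invf_le1 // ?ler1n // ltr0Sn.
have e_ge0 : forall n : nat, 0 <= (n.+1%:R)^-1 :> R by move=> n; rewrite invr_ge0 ler0n.
have e_mono : forall m n : nat, (m <= n)%N -> (n.+1%:R)^-1 <= (m.+1%:R)^-1 :> R.
  by move=> m n hmn; rewrite lef_pV2 ?posrE ?ltr0Sn // ler_nat ltnS.
have para : forall i j, n2 (ms i - ms j) <= 4 * d * ((i.+1%:R)^-1 + (j.+1%:R)^-1)
     + 2 * (i.+1%:R)^-1 ^+ 2 + 2 * (j.+1%:R)^-1 ^+ 2.
  move=> i j.
  set a := z - ms i; set b := z - ms j.
  set mid := (2^-1 : R)%:C *: (ms i + ms j).
  have hmid : M mid by apply: MZ; apply: MD; case: (hms i); case: (hms j).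
  have hab : a + b = (2 : R)%:C *: (z - mid).
    rewrite /a /b /mid scalerBr scalerA -rmorphM divff ?pnatr_eq0 // rmorph1 scale1r.
    by rewrite rmorph_nat scaler_nat mulr2n opprD addrACA.
  have hba : a - b = ms j - ms i by rewrite /a /b opprB addrC addrA subrK.
  have par : n2 (a - b) + n2 (a + b) = 2 * n2 a + 2 * n2 b.
    rewrite n2B // n2D //; ring.
  have h4 : 4 * d ^+ 2 <= n2 (a + b).
    rewrite hab n2R //.
    have := dle _ hmid; rewrite -(nr_sq Hip) => hd.
    have : d ^+ 2 <= nr (z - mid) ^+ 2 by rewrite ler_sqr // nnegrE ?nr_ge0.
    lra.
  have ha : n2 a <= (d + (i.+1%:R)^-1) ^+ 2.
    rewrite -(nr_sq Hip) ler_sqr ?nnegrE ?nr_ge0 ?addr_ge0 //; case: (hms i) => _ /ltW //.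
  have hb : n2 b <= (d + (j.+1%:R)^-1) ^+ 2.
    rewrite -(nr_sq Hip) ler_sqr ?nnegrE ?nr_ge0 ?addr_ge0 //; case: (hms j) => _ /ltW //.
  have -> : ms i - ms j = - (a - b) by rewrite hba opprB.
  rewrite n2N //.
  move: ha hb h4 par; set ei := (i.+1%:R)^-1; set ej := (j.+1%:R)^-1.
  move=> ha hb h4 par.
  have e1 : (d + ei) ^+ 2 = d ^+ 2 + 2 * d * ei + ei ^+ 2 by ring.
  have e2 : (d + ej) ^+ 2 = d ^+ 2 + 2 * d * ej + ej ^+ 2 by ring.
  rewrite e1 in ha; rewrite e2 in hb.
  have e3 : 4 * d * (ei + ej) = 4 * (d * ei) + 4 * (d * ej) by ring.
  rewrite e3; lra.
have cs : cauchy_seq ip ms.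
  move=> eps eps0.
  have k0 : 0 < eps ^+ 2 / (8 * d + 4) by apply: divr_gt0; [exact: exprn_gt0|lra].
  have [N hN] := small_inv k0.
  exists N => m n hm hn.
  apply: sq_lt; [exact: nr_ge0|exact: ltW|].
  rewrite nr_sq //; apply: le_lt_trans (para m n) _.
  have em := hN m hm; have en := hN n hn.
  have em1 := e_le1 m; have en1 := e_le1 n; have em0 := e_ge0 m; have en0 := e_ge0 n.
  have hk : eps ^+ 2 / (8 * d + 4) * (8 * d + 4) = eps ^+ 2 by rewrite divfK // gt_eqF //; lra.
  set em_ := (m.+1%:R)^-1 in em em1 em0 *; set en_ := (n.+1%:R)^-1 in en en1 en0 *.
  set k := eps ^+ 2 / (8 * d + 4) in hk em en k0.
  nra.
have [p hp] := complete cs.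
have Mp : M p by apply: HMc hp => n; case: (hms n).
exists p; split => //.
have hzp : nr (z - p) <= d.
  apply: le_eps => e e0.
  have [N1 h1] := small_inv (divr_gt0 e0 (ltr0Sn R 1)).
  have [N2 h2] := hp (e / 2) (divr_gt0 e0 (ltr0Sn _ 1)).
  set n := maxn N1 N2.
  have := h1 n (leq_maxl _ _); have := h2 n (leq_maxr _ _).
  have := nr_tri Hip z (ms n) p; case: (hms n) => _.
  move=> a1 a2 a3 a4; apply: (le_lt_trans a2).
  have a5 : nr (z - ms n) < d + e / 2 by apply: (lt_trans a1); rewrite ltrD2l.
  by apply: (lt_le_trans (ltrD a5 a3)); rewrite -addrA -splitr.
have hRe : forall w, M w -> Re (ip (z - p) w) = 0.
  move=> w hw.
  have : (- Re (ip (z - p) w)) ^+ 2 <= 0 * n2 w.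
    apply: disc; first exact: n2_ge0.
    move=> t.
    have hm : M (p + t%:C *: w) by apply: MD => //; apply: MZ.
    have := dle _ hm.
    have -> : z - (p + t%:C *: w) = (z - p) - t%:C *: w by rewrite opprD addrA.
    move=> hd.
    have : nr (z - p) ^+ 2 <= nr (z - p - t%:C *: w) ^+ 2.
      by rewrite ler_sqr ?nnegrE ?nr_ge0 //; apply: le_trans hzp hd.
    rewrite !nr_sq // (n2B Hip (z - p)) n2R // Re_ipRr //; lra.
  rewrite mul0r sqrrN => h; nra.
move=> w hw; apply: c_eq; first by rewrite hRe.
have := hRe _ (MZ 'i hw).
rewrite ipZr // cReM /= => h.
lra.
Qed.

Lemma orth_proj_spec : is_orth_proj ip M (orth_proj ip M).
Proof.
rewrite /orth_proj; apply: epsilon_spec.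
have [f hf] := choice _ proj_exists.
by exists f => z; exact: hf.
Qed.

End Proj.

End PP3.
Import PP3.

Module PP4.
Local Open Scope ring_scope.
Local Open Scope complex_scope.
Local Open Scope classical_set_scope.
Set Implicit Arguments. Unset Strict Implicit.

Section ProjProps.
Variable R : realType.
Local Notation Re := (@complex.Re R).
Local Notation Im := (@complex.Im R).
Variables (V : lmodType R[i]) (ip : V -> V -> R[i]).
Hypothesis Hip : is_inner_product ip.
Implicit Types (x y z : V).
Local Notation nr := (ipnorm ip).
Local Notation n2 := (n2 ip).

Section OneProj.
Variables (M : set V) (P : V -> V).
Hypothesis HM : subspace M.
Hypothesis HP : is_orth_proj ip M P.

Lemma projM z : M (P z). Proof using Hip HM HP. by case: (HP z). Qed.
Lemma proj_orth z w : M w -> ip (z - P z) w = 0. Proof using Hip HM HP. by case: (HP z) => _; apply. Qed.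

Lemma pyth z : n2 z = n2 (P z) + n2 (z - P z).
Proof using Hip HM HP.
have -> : n2 z = n2 (P z + (z - P z)) by rewrite addrC subrK.
have h : Re (ip (z - P z) (P z)) = 0 by rewrite proj_orth; [reflexivity|exact: projM].
by rewrite n2D // Re_ipC // h mulr0 addr0.
Qed.
Lemma nr_proj_le z : nr (P z) <= nr z.
Proof using Hip HM HP.
apply: sq_le; rewrite ?nr_ge0 // !nr_sq // (pyth z); have := n2_ge0 Hip (z - P z); lra.
Qed.
Lemma nr_projc_le z : nr (z - P z) <= nr z.
Proof using Hip HM HP.
apply: sq_le; rewrite ?nr_ge0 // !nr_sq // (pyth z); have := n2_ge0 Hip (P z); lra.
Qed.
Lemma proj_best z m : M m -> nr (z - P z) <= nr (z - m).
Proof using Hip HM HP.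
move=> hm; apply: sq_le; rewrite ?nr_ge0 // !nr_sq //.
have -> : z - m = (z - P z) + (P z - m) by rewrite addrA subrK.
have h : Re (ip (z - P z) (P z - m)) = 0.
  by rewrite proj_orth; [reflexivity|apply: (MB HM) => //; exact: projM].
rewrite (n2D Hip (z - P z)) h mulr0 addr0.
have := n2_ge0 Hip (P z - m); lra.
Qed.
Lemma ipP v r : M r -> ip (P v) r = ip v r.
Proof using Hip HM HP. by move=> hr; have := proj_orth v hr; rewrite ipBl // => /eqP; rewrite subr_eq0 => /eqP. Qed.
Lemma proj_add x y : P (x + y) = P x + P y.
Proof using Hip HM HP.
set r := P (x + y) - (P x + P y).
have hr : M r by apply: (MB HM); [exact: projM|apply: (MD HM); exact: projM].
apply/eqP; rewrite -subr_eq0; apply/eqP; apply: (ip_def Hip).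
rewrite -/r {1}/r ipBl // ipDl // !ipP // ipDl //; exact: subrr.
Qed.
Lemma proj_n2 w : n2 (P w) = Re (ip w (P w)).
Proof using Hip HM HP. by rewrite /PP2.n2 ipP //; exact: projM. Qed.
End OneProj.

Lemma proj_diff_bound (M N : set V) (PM PN : V -> V) (c : R) :
  subspace M -> subspace N -> is_orth_proj ip M PM -> is_orth_proj ip N PN -> 0 <= c ->
  (forall u, M u -> exists v, N v /\ nr (u - v) <= c * nr u) ->
  (forall u, N u -> exists v, M v /\ nr (u - v) <= c * nr u) ->
  forall z, nr (PM z - PN z) <= 2 * c * nr z.
Proof.
move=> sM sN hPM hPN c0 hMN hNM z.
set w := z - PM z.
have ez : PN z = PN (PM z) + PN w by rewrite -(proj_add sN hPN) /w addrC subrK.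
have -> : PM z - PN z = (PM z - PN (PM z)) - PN w by rewrite ez opprD addrA.
have t1 : nr (PM z - PN (PM z)) <= c * nr z.
  have [v [hv hv']] := hMN _ (projM sM hPM z).
  apply: le_trans (proj_best sN hPN _ hv) _; apply: le_trans hv' _.
  by rewrite ler_wpM2l // (nr_proj_le sM hPM).
have t2 : nr (PN w) <= c * nr w.
  set s := PN w.
  have hs : n2 s <= nr w * (c * nr s).
    rewrite (proj_n2 sN hPN).
    have -> : ip w s = ip w (s - PM s) + ip w (PM s) by rewrite -ipDr // subrK.
    have -> : ip w (PM s) = 0 by rewrite /w (proj_orth sM hPM) //; exact: (projM sM hPM).
    rewrite addr0; apply: le_trans (Re_ip_le Hip _ _) _.
    rewrite ler_wpM2l ?nr_ge0 //.
    have [u [hu hu']] := hNM _ (projM sN hPN w).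
    exact: le_trans (proj_best sM hPM _ hu) hu'.
  rewrite -(nr_sq Hip) in hs.
  have [->|sn0] := eqVneq (nr s) 0; first by rewrite mulr_ge0 ?nr_ge0.
  have sp : 0 < nr s by rewrite lt_def sn0 nr_ge0.
  have : nr s * nr s <= nr s * (c * nr w) by rewrite -expr2; lra.
  by rewrite ler_pM2l.
have t3 : nr w <= nr z := nr_projc_le sM hPM z.
apply: le_trans (nrB Hip _ _) _.
have : c * nr w <= c * nr z by rewrite ler_wpM2l.
lra.
Qed.

End ProjProps.

Section Prod.
Variable R : realType.
Local Notation Re := (@complex.Re R).
Variables (V1 V2 : lmodType R[i]) (ip1 : V1 -> V1 -> R[i]) (ip2 : V2 -> V2 -> R[i]).
Hypothesis H1 : is_inner_product ip1.
Hypothesis H2 : is_inner_product ip2.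
Local Notation ips := (ipsum ip1 ip2).

Lemma ipsum_ip : is_inner_product ips.
Proof.
split.
- move=> a x y z; rewrite /ipsum /=.
  by rewrite (ipDZl H2) (ipDZl H1) mulrDr addrACA.
- by move=> x y; rewrite /ipsum (ipC H2 x.1) (ipC H1 x.2) rmorphD.
- by move=> x; rewrite /ipsum addr_ge0 // ip_ge0.
- move=> [x2 x1]; rewrite /ipsum /= => /eqP.
  rewrite paddr_eq0 ?ip_ge0 // => /andP[/eqP h2 /eqP h1].
  by rewrite (ip_def H2 h2) (ip_def H1 h1).
Qed.

Lemma n2sum z : n2 ips z = n2 ip2 z.1 + n2 ip1 z.2.
Proof. by rewrite /n2 /ipsum cReD. Qed.

Lemma nr_fst z : ipnorm ip2 z.1 <= ipnorm ips z.
Proof. rewrite /ipnorm ler_sqrt; last exact: (n2_ge0 ipsum_ip). by rewrite /ipsum cReD lerDl; exact: (n2_ge0 H1). Qed.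
Lemma nr_snd z : ipnorm ip1 z.2 <= ipnorm ips z.
Proof. rewrite /ipnorm ler_sqrt; last exact: (n2_ge0 ipsum_ip). by rewrite /ipsum cReD lerDr; exact: (n2_ge0 H2). Qed.
Lemma nr_sum_le z : ipnorm ips z <= ipnorm ip2 z.1 + ipnorm ip1 z.2.
Proof.
apply: sq_le; rewrite ?nr_ge0 ?addr_ge0 ?nr_ge0 //.
rewrite (nr_sq ipsum_ip) /PP2.n2 /ipsum cReD.
have h2 := nr_sq H2 z.1; have h1 := nr_sq H1 z.2; rewrite /PP2.n2 in h1 h2.
rewrite -h1 -h2.
have := nr_ge0 ip2 z.1; have := nr_ge0 ip1 z.2; nra.
Qed.

Lemma complete_sum :
  (forall u, cauchy_seq ip1 u -> exists l, converges_to ip1 u l) ->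
  (forall u, cauchy_seq ip2 u -> exists l, converges_to ip2 u l) ->
  forall u, cauchy_seq ips u -> exists l, converges_to ips u l.
Proof.
move=> c1 c2 u hu.
have [l2 hl2] : exists l, converges_to ip1 (fun n => (u n).2) l.
  apply: c1 => e e0; have [N hN] := hu e e0; exists N => m n hm hn.
  exact: le_lt_trans (nr_snd (u m - u n)) (hN _ _ hm hn).
have [l1 hl1] : exists l, converges_to ip2 (fun n => (u n).1) l.
  apply: c2 => e e0; have [N hN] := hu e e0; exists N => m n hm hn.
  exact: le_lt_trans (nr_fst (u m - u n)) (hN _ _ hm hn).
exists (l1, l2) => e e0.
have [N1 h1] := hl1 (e / 2) (divr_gt0 e0 (ltr0Sn _ 1)).
have [N2 h2] := hl2 (e / 2) (divr_gt0 e0 (ltr0Sn _ 1)).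
exists (maxn N1 N2) => n hn.
have a1 := h1 n (leq_trans (leq_maxl _ _) hn); have a2 := h2 n (leq_trans (leq_maxr _ _) hn).
apply: le_lt_trans (nr_sum_le _) _.
rewrite /=; by rewrite [e]splitr ltrD.
Qed.

Lemma conv_sum_fst u l : converges_to ips u l -> converges_to ip2 (fun n => (u n).1) l.1.
Proof. by move=> h e e0; have [N hN] := h e e0; exists N => n hn; apply: le_lt_trans (nr_fst _) (hN n hn). Qed.
Lemma conv_sum_snd u l : converges_to ips u l -> converges_to ip1 (fun n => (u n).2) l.2.
Proof. by move=> h e e0; have [N hN] := h e e0; exists N => n hn; apply: le_lt_trans (nr_snd _) (hN n hn). Qed.

Lemma linop_app0 (A : op V1 V2) : linear_op A -> app A 0 = 0.
Proof.
case=> d0 _ hl; have := hl 1 0 0 d0 d0; rewrite scaler0 addr0 scale1r => h.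
have : app A 0 + 0 = app A 0 + app A 0 by rewrite addr0 -h.
by move/addrI.
Qed.

Lemma graph_subspace (A : op V1 V2) : linear_op A -> subspace (graph A).
Proof.
move=> hA; have [d0 dl al] := hA; split.
  by exists 0; split => //; rewrite linop_app0.
move=> a _ _ [x [hx ->]] [y [hy ->]]; exists (a *: x + y); split; first exact: dl.
by rewrite al.
Qed.

Lemma graph_closed (A : op V1 V2) : closed_op ip1 ip2 A -> seq_closed ips (graph A).
Proof.
move=> cA u l hu hl.
have hx : forall n, exists x, dom A x /\ u n = (app A x, x) by move=> n; case: (hu n) => x hx; exists x.
have [f hf] := choice _ hx.
have e1 : forall n, (u n).2 = f n by move=> n; case: (hf n) => _ ->.
have e2 : forall n, (u n).1 = app A (f n) by move=> n; case: (hf n) => _ ->.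
have c2 := conv_sum_snd hl; have c1 := conv_sum_fst hl.
have c2' : converges_to ip1 f l.2.
  by move=> e e0; have [N hN] := c2 e e0; exists N => n hn; rewrite -e1; exact: hN.
have c1' : converges_to ip2 (app A \o f) l.1.
  by move=> e e0; have [N hN] := c1 e e0; exists N => n hn; rewrite /= -e2; exact: hN.
have [hd ha] := cA f l.2 l.1 (fun n => proj1 (hf n)) c2' c1'.
by exists l.2; split => //; rewrite ha; case: l {hl c1 c2 c1' c2' hd ha}.
Qed.

End Prod.

End PP4.
Import PP4.

Module PP5.
Local Open Scope ring_scope.
Local Open Scope complex_scope.
Local Open Scope classical_set_scope.
Set Implicit Arguments. Unset Strict Implicit.

Section Ops.
Variable R : realType.
Local Notation Re := (@complex.Re R).
Local Notation Im := (@complex.Im R).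
Variables (V1 V2 : lmodType R[i]) (ip1 : V1 -> V1 -> R[i]) (ip2 : V2 -> V2 -> R[i]).
Hypothesis H1 : is_inner_product ip1.
Hypothesis H2 : is_inner_product ip2.
Hypothesis C1 : forall u, cauchy_seq ip1 u -> exists l, converges_to ip1 u l.
Hypothesis C2 : forall u, cauchy_seq ip2 u -> exists l, converges_to ip2 u l.
Local Notation nr1 := (ipnorm ip1).
Local Notation nr2 := (ipnorm ip2).
Local Notation ips := (ipsum ip1 ip2).

Lemma gap_bound (A B : op V1 V2) (c : R) : 0 <= c ->
  linear_op A -> closed_op ip1 ip2 A -> linear_op B -> closed_op ip1 ip2 B ->
  (forall u, graph A u -> exists v, graph B v /\ ipnorm ips (u - v) <= c * ipnorm ips u) ->
  (forall u, graph B u -> exists v, graph A v /\ ipnorm ips (u - v) <= c * ipnorm ips u) ->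
  gap ip1 ip2 A B <= 2 * c.
Proof.
move=> c0 lA cA lB cB hAB hBA.
have Hs := ipsum_ip H1 H2.
have Cs := complete_sum H1 H2 C1 C2.
have sA := graph_subspace lA; have sB := graph_subspace lB.
have pA := orth_proj_spec Hs sA Cs (graph_closed H1 H2 cA).
have pB := orth_proj_spec Hs sB Cs (graph_closed H1 H2 cB).
have hb := proj_diff_bound Hs sA sB pA pB c0 hAB hBA.
rewrite /gap; apply: ge_sup.
  by exists (ipnorm ips (orth_proj ips (graph A) 0 - orth_proj ips (graph B) 0)); exists 0; split => //; rewrite nr0.
move=> r [z [hz ->]].
apply: le_trans (hb z) _.
by rewrite -[X in _ <= X]mulr1 ler_wpM2l // mulr_ge0.
Qed.


Definition pert (A : op V1 V2) (x0 : V1) (v : V2) : op V1 V2 :=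
  Op (dom A) (fun x => app A x + ip1 x x0 *: v).

Variables (A : op V1 V2) (x0 : V1) (v : V2).
Local Notation B := (pert A x0 v).
Local Notation K := (nr1 x0 * nr2 v).

Lemma K_ge0 : 0 <= K. Proof. by rewrite mulr_ge0 ?nr_ge0. Qed.

Lemma pert_linear : linear_op A -> linear_op B.
Proof.
case=> d0 dl al; split => // a x y hx hy /=.
by rewrite al // (ipDZl H1) scalerDl -scalerA scalerDr addrACA.
Qed.

Lemma pert_dense : densely_defined ip1 A -> densely_defined ip1 B.
Proof. by case=> lA dA; split; [exact: pert_linear|exact: dA]. Qed.

Lemma F_bound x : nr2 (ip1 x x0 *: v) <= nr1 x * K.
Proof.
rewrite (nrZ H2) mulrA ler_wpM2r ?nr_ge0 //; exact: (abs_ip_le H1).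
Qed.

Lemma conv_ext (W : lmodType R[i]) (ip : W -> W -> R[i]) (u w : nat -> W) l :
  (forall n, u n = w n) -> converges_to ip u l -> converges_to ip w l.
Proof. by move=> e h eps eps0; have [N hN] := h eps eps0; exists N => n hn; rewrite -e; exact: hN. Qed.

Lemma pert_closed : closed_op ip1 ip2 A -> closed_op ip1 ip2 B.
Proof.
move=> cA u x y hu cu cBu.
have cF : converges_to ip2 (fun n => ip1 (u n) x0 *: v) (ip1 x x0 *: v).
  move=> e e0.
  have k1 : 0 < K + 1 by have := K_ge0; lra.
  have [N hN] := cu (e / (K + 1)) (divr_gt0 e0 k1).
  exists N => n hn.
  rewrite -scalerBl -(ipBl H1).
  apply: le_lt_trans (F_bound _) _.
  have h := hN n hn.
  have : nr1 (u n - x) * K <= e / (K + 1) * K by rewrite ler_wpM2r ?K_ge0 // ltW.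
  move=> h2; apply: le_lt_trans h2 _.
  rewrite mulrAC ltr_pdivrMr // mulrDr mulr1; lra.
have cAu : converges_to ip2 (app A \o u) (y - ip1 x x0 *: v).
  apply: conv_ext (conv_sub H2 cBu cF).
  by move=> n /=; rewrite addrK.
have [hx hAx] := cA u x _ hu cu cAu.
by split => //=; rewrite hAx subrK.
Qed.

Lemma pert_gap : densely_defined ip1 A -> closed_op ip1 ip2 A ->
  gap ip1 ip2 A B <= 2 * K.
Proof.
move=> [lA dA] cA.
apply: gap_bound => //; [exact: K_ge0|exact: pert_linear|exact: pert_closed|..].
- move=> _ [x [hx ->]]; exists (app B x, x); split; first by exists x.
  apply: le_trans (nr_sum_le H1 H2 _) _.
  rewrite /=.
  have h3 : nr1 (x - x) = 0 by rewrite subrr nr0.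
  have h1 : nr2 (app A x - (app A x + ip1 x x0 *: v)) <= nr1 x * K.
    by rewrite opprD addrA subrr sub0r (nrN H2); exact: F_bound.
  have h2 := nr_snd H1 H2 (app A x, x).
  have := K_ge0; rewrite /= in h2; nra.
- move=> _ [x [hx ->]]; exists (app A x, x); split; first by exists x.
  apply: le_trans (nr_sum_le H1 H2 _) _.
  rewrite /=.
  have h3 : nr1 (x - x) = 0 by rewrite subrr nr0.
  have h1 : nr2 ((app A x + ip1 x x0 *: v) - app A x) <= nr1 x * K.
    by rewrite addrAC subrr add0r; exact: F_bound.
  have h2 := nr_snd H1 H2 (app B x, x).
  have := K_ge0; rewrite /= in h2; nra.
Qed.

End Ops.

End PP5.
Import PP5.

Module PP6.
Local Open Scope ring_scope.
Local Open Scope complex_scope.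
Local Open Scope classical_set_scope.
Set Implicit Arguments. Unset Strict Implicit.

Section MinAtt.
Variable R : realType.
Local Notation Re := (@complex.Re R).
Local Notation Im := (@complex.Im R).
Variables (V1 V2 : lmodType R[i]) (ip1 : V1 -> V1 -> R[i]) (ip2 : V2 -> V2 -> R[i]).
Hypothesis H1 : is_inner_product ip1.
Hypothesis H2 : is_inner_product ip2.
Local Notation nr1 := (ipnorm ip1).
Local Notation nr2 := (ipnorm ip2).

Variables (A : op V1 V2) (x0 : V1) (y0 : V2).
Hypothesis lA : linear_op A.
Hypothesis hx0 : dom A x0.
Hypothesis nx0 : nr1 x0 = 1.
Hypothesis P1 : forall x, dom A x -> ip1 x x0 = 0 -> ip2 y0 (app A x) = 0.
Hypothesis P2 : forall x, dom A x -> nr2 y0 * nr1 x <= nr2 (app A x).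

Local Notation B := (pert ip1 A x0 (y0 - app A x0)).

Lemma ix0 : ip1 x0 x0 = 1.
Proof. by rewrite (ipxx H1) -(nr_sq H1) nx0 expr1n. Qed.

Lemma Bx0 : app B x0 = y0.
Proof. by rewrite /= ix0 scale1r addrC subrK. Qed.

Lemma B_lower x : dom A x -> nr1 x = 1 -> nr2 y0 <= nr2 (app B x).
Proof.
move=> hx nx.
have [d0 dl al] := lA.
set a := ip1 x x0; set x' := x - a *: x0.
have hx' : dom A x'.
  have -> : x' = (- a) *: x0 + x by rewrite /x' scaleNr addrC.
  exact: dl.
have o' : ip1 x' x0 = 0 by rewrite /x' (ipBl H1) (ipZl H1) ix0 mulr1 subrr.
have ex : x = a *: x0 + x' by rewrite /x' addrC subrK.
have Ax : app A x = a *: app A x0 + app A x' by rewrite {1}ex al.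
have Bx : app B x = app A x' + a *: y0.
  rewrite /= Ax scalerBr.
  by rewrite [a *: y0 - _]addrC addrA [_ + app A x' - _]addrAC subrr add0r.
have h0 : ip2 (app A x') (a *: y0) = 0.
  by rewrite (ipZr H2) (ipC H2) P1 // conjc0 mulr0.
have h0' : Re (ip2 (app A x') (a *: y0)) = 0 by rewrite h0; reflexivity.
have h1 : ip1 (a *: x0) x' = 0.
  by rewrite (ipZl H1) (ipC H1) o' conjc0 mulr0.
have h1' : Re (ip1 (a *: x0) x') = 0 by rewrite h1; reflexivity.
have nB : n2 ip2 (app B x) = n2 ip2 (app A x') + (Re a ^+ 2 + Im a ^+ 2) * n2 ip2 y0.
  by rewrite Bx (n2D H2) h0' mulr0 addr0 (n2Z H2).
have nX : n2 ip1 x = (Re a ^+ 2 + Im a ^+ 2) + n2 ip1 x'.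
  rewrite {1}ex (n2D H1) h1' mulr0 addr0 (n2Z H1).
  by rewrite -(nr_sq H1 x0) nx0 expr1n mulr1.
have hP2 : n2 ip2 y0 * n2 ip1 x' <= n2 ip2 (app A x').
  rewrite -(nr_sq H2) -(nr_sq H1) -(nr_sq H2) -exprMn.
  by rewrite ler_sqr ?nnegrE ?mulr_ge0 ?nr_ge0 //; exact: P2.
have n1 : n2 ip1 x = 1 by rewrite -(nr_sq H1) nx expr1n.
apply: sq_le; rewrite ?nr_ge0 // !nr_sq // nB.
have g1 := n2_ge0 H2 y0; have g2 := n2_ge0 H1 x'.
have g3 : 0 <= Re a ^+ 2 + Im a ^+ 2 by rewrite addr_ge0 ?sqr_ge0.
rewrite n1 in nX.
have -> : n2 ip2 y0 = n2 ip2 y0 * ((Re a ^+ 2 + Im a ^+ 2) + n2 ip1 x') by rewrite -nX mulr1.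
nra.
Qed.

Lemma pert_minatt : minimum_attaining ip1 ip2 B.
Proof.
exists x0; split => //; split => //.
rewrite Bx0 /min_modulus.
set S := [set r | _].
have Sy : S (nr2 y0) by exists x0; rewrite Bx0.
have lb : lbound S (nr2 y0) by move=> r [x [hx [nx ->]]]; exact: B_lower.
apply/eqP; rewrite eq_le; apply/andP; split.
  by apply: lb_le_inf => //; exists (nr2 y0).
by apply: (ge_inf (ex_intro _ _ lb)).
Qed.

End MinAtt.

End PP6.
Import PP6.

Module PP7.
Local Open Scope ring_scope.
Local Open Scope complex_scope.
Local Open Scope classical_set_scope.
Set Implicit Arguments. Unset Strict Implicit.

Section Main.
Variable R : realType.
Local Notation Re := (@complex.Re R).
Local Notation Im := (@complex.Im R).
Variables (V1 V2 : lmodType R[i]) (ip1 : V1 -> V1 -> R[i]) (ip2 : V2 -> V2 -> R[i]).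
Hypothesis H1 : is_inner_product ip1.
Hypothesis H2 : is_inner_product ip2.
Hypothesis C1 : forall u, cauchy_seq ip1 u -> exists l, converges_to ip1 u l.
Hypothesis C2 : forall u, cauchy_seq ip2 u -> exists l, converges_to ip2 u l.
Local Notation nr1 := (ipnorm ip1).
Local Notation nr2 := (ipnorm ip2).
Variable A : op V1 V2.
Hypothesis lA : linear_op A.
Hypothesis cA : closed_op ip1 ip2 A.

Lemma domZ (t : R[i]) x : dom A x -> dom A (t *: x).
Proof. by case: lA => d0 dl _ hx; rewrite -[_ *: _]addr0; apply: dl. Qed.
Lemma AZ (t : R[i]) x : dom A x -> app A (t *: x) = t *: app A x.
Proof.
case: lA => d0 dl al hx; rewrite -[_ *: x]addr0 al // (linop_app0 lA) addr0 //.
Qed.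
Lemma domD x y : dom A x -> dom A y -> dom A (x + y).
Proof. by case: lA => d0 dl _ hx hy; rewrite -[x]scale1r; apply: dl. Qed.
Lemma AD x y : dom A x -> dom A y -> app A (x + y) = app A x + app A y.
Proof. by case: lA => d0 dl al hx hy; rewrite -[x]scale1r al // !scale1r. Qed.
Lemma domB x y : dom A x -> dom A y -> dom A (x - y).
Proof. by move=> hx hy; apply: domD => //; rewrite -scaleN1r; apply: domZ. Qed.
Lemma AB x y : dom A x -> dom A y -> app A (x - y) = app A x - app A y.
Proof.
move=> hx hy; rewrite AD //; last by rewrite -scaleN1r; apply: domZ.
by rewrite -scaleN1r AZ // scaleN1r.
Qed.

Variable m : R.
Hypothesis m0 : 0 <= m.
Hypothesis hm : forall x, dom A x -> m * nr1 x <= nr2 (app A x).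

Lemma hm2 x : dom A x -> m ^+ 2 * n2 ip1 x <= n2 ip2 (app A x).
Proof.
move=> hx; rewrite -(nr_sq H1) -(nr_sq H2) -exprMn.
by rewrite ler_sqr ?nnegrE ?mulr_ge0 ?nr_ge0 //; exact: hm.
Qed.

Variable x0 : V1.
Hypothesis hx0 : dom A x0.
Hypothesis nx0 : nr1 x0 = 1.

Definition Wsp := [set y | exists x, dom A x /\ ip1 x x0 = 0 /\ y = app A x].

Lemma W_sub : subspace Wsp.
Proof.
split.
  exists 0; split; first by case: lA.
  by rewrite (ip0l H1) (linop_app0 lA).
move=> a _ _ [x [hx [ox ->]]] [y [hy [oy ->]]].
exists (a *: x + y); split; first by apply: domD => //; apply: domZ.
by rewrite (ipDZl H1) ox oy mulr0 addr0 AD ?AZ //; apply: domZ.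
Qed.

Hypothesis mpos : 0 < m.

Lemma W_closed : seq_closed ip2 Wsp.
Proof.
move=> u y hu cu.
have : forall n, exists x, dom A x /\ ip1 x x0 = 0 /\ u n = app A x by move=> n; case: (hu n) => x hx; exists x.
move=> /choice [f hf].
have cau := conv_cauchy H2 cu.
have cf : cauchy_seq ip1 f.
  move=> e e0; have [N hN] := cau (e * m) (mulr_gt0 e0 mpos).
  exists N => i j hi hj.
  have [hfi [_ ei]] := hf i; have [hfj [_ ej]] := hf j.
  have h := hN _ _ hi hj; rewrite ei ej -AB // in h.
  have h2 := hm (domB hfi hfj).
  have : m * nr1 (f i - f j) < m * e by rewrite mulrC in h; apply: le_lt_trans h2 h.
  by rewrite ltr_pM2l.
have [x hx] := C1 cf.
have cAf : converges_to ip2 (app A \o f) y.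
  by apply: conv_ext cu => n /=; case: (hf n) => _ [_ ->].
have [dx Ax] := cA (fun n => proj1 (hf n)) hx cAf.
exists x; split => //; split => //.
by apply: (conv_ip0 H1 hx) => n; case: (hf n) => _ [].
Qed.

End Main.

End PP7.
Import PP7.

Theorem corollary3p6 (R : realType) (V1 V2 : lmodType R[i])
  (ip1 : V1 -> V1 -> R[i]) (ip2 : V2 -> V2 -> R[i])
  (H1 : is_hilbert ip1) (H2 : is_hilbert ip2)
  (A : op V1 V2) (hA : densely_defined ip1 A) (cA : closed_op ip1 ip2 A)
  (eps : R) (heps : 0 < eps) :
  exists B : op V1 V2,
    [/\ densely_defined ip1 B, closed_op ip1 ip2 B, minimum_attaining ip1 ip2 B
      & gap ip1 ip2 A B < eps].
Proof.
case: H1 => Hi1 C1 I1; case: H2 => Hi2 C2 _.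
have [lA dA] := hA.
pose nr1 := ipnorm ip1; pose nr2 := ipnorm ip2.
have [u1 [hu1 nu1]] : exists u, dom A u /\ ipnorm ip1 u = 1.
  have [e he] := I1 1%N.
  have e00 : ip1 (e 0%N) (e 0%N) = 1 by rewrite he // eqxx.
  have ne : ipnorm ip1 (e 0%N) = 1.
    rewrite /ipnorm e00.
    have -> : complex.Re (1 : R[i]) = 1 by reflexivity.
    exact: sqrtr1.
  have h2 : (0 : R) < 1 / 2 by rewrite divr_gt0.
  have [d [hd hdn]] := dA (e 0%N) (1 / 2) h2.
  have := nr_tri Hi1 (e 0%N) d 0; rewrite !subr0 ne => ht.
  have nd : 0 < ipnorm ip1 d by lra.
  exists ((ipnorm ip1 d)^-1%:C%C *: d); split; first exact: domZ.
  by rewrite (nrR Hi1) ?invr_ge0 ?ltW // mulVf // gt_eqF.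
pose S := [set r | exists x, dom A x /\ ipnorm ip1 x = 1 /\ r = ipnorm ip2 (app A x)]%classic.
have S0 : S (ipnorm ip2 (app A u1)) by exists u1.
have lb0 : lbound S 0 by move=> r [x [_ [_ ->]]]; exact: nr_ge0.
have hinf : has_inf S by split; [exists (ipnorm ip2 (app A u1))|exists 0].
pose m := inf S.
have m0 : 0 <= m by apply: lb_le_inf => //; exists (ipnorm ip2 (app A u1)).
have hm : forall x, dom A x -> m * ipnorm ip1 x <= ipnorm ip2 (app A x).
  move=> x hx.
  have [n0|nn0] := eqVneq (ipnorm ip1 x) 0.
    by rewrite n0 mulr0 nr_ge0.
  have np : 0 < ipnorm ip1 x by rewrite lt_def nn0 nr_ge0.
  set t := (ipnorm ip1 x)^-1.
  have t0 : 0 <= t by rewrite invr_ge0 ltW.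
  have : m <= ipnorm ip2 (app A (t%:C%C *: x)).
    apply: (ge_inf (proj2 hinf)); exists (t%:C%C *: x); split; first exact: domZ.
    by rewrite (nrR Hi1) // mulVf // gt_eqF.
  rewrite AZ // (nrR Hi2) // => h.
  have := ler_wpM2r (nr_ge0 ip1 x) h.
  by rewrite mulrAC /t mulVf ?gt_eqF // mul1r.
have near : forall d, 0 < d -> exists x0, [/\ dom A x0, ipnorm ip1 x0 = 1 & ipnorm ip2 (app A x0) < m + d].
  move=> d d0; have [r [x [hx [nx ->]]] hr] := inf_adherent d0 hinf.
  by exists x.
have [mlt|mge] := ltrP m (eps / 4).
- have e4 : 0 < eps / 4 by lra.
  have [x0 [hx0 nx0 ha]] := near _ e4.
  exists (pert ip1 A x0 (0 - app A x0)); split.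
  + exact: pert_dense.
  + exact: pert_closed.
  + apply: (pert_minatt Hi1 Hi2 lA hx0 nx0) => [x hx _|x hx].
      exact: ip0l.
    by rewrite (nr0 Hi2) mul0r nr_ge0.
  + apply: le_lt_trans (pert_gap Hi1 Hi2 C1 C2 x0 (0 - app A x0) hA cA) _.
    rewrite nx0 mul1r sub0r (nrN Hi2); lra.
- have mpos : 0 < m by lra.
  pose e := Num.min (eps / 4) 1.
  have e0 : 0 < e by rewrite /e lt_min ltr01 andbT; lra.
  have e1 : e <= 1 by rewrite /e ge_min lexx orbT.
  have e4 : e <= eps / 4 by rewrite /e ge_min lexx.
  pose dl := e ^+ 2 / (2 * m + 2).
  have m2 : 0 < 2 * m + 2 by lra.
  have dl0 : 0 < dl by rewrite /dl divr_gt0 // exprn_gt0.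
  have hdl : dl * (2 * m + 2) = e ^+ 2 by rewrite /dl divfK // gt_eqF.
  have dle : dl <= e / 2 by nra.
  have [x0 [hx0 nx0 ha]] := near _ dl0.
  set a := ipnorm ip2 (app A x0) in ha *.
  have am : m <= a by have := hm x0 hx0; rewrite nx0 mulr1.
  have apos : 0 < a by lra.
  pose W := Wsp ip1 A x0.
  have sW : subspace W := W_sub Hi1 lA x0.
  have cW : seq_closed ip2 W := W_closed Hi1 Hi2 C1 lA cA hm mpos.
  have pW := orth_proj_spec Hi2 sW C2 cW.
  set P := orth_proj ip2 W in pW *.
  pose s := m / a.
  have s0 : 0 <= s by rewrite /s divr_ge0 // ltW.
  have sa : s * a = m by rewrite /s divfK // gt_eqF.
  have s1 : s <= 1 by rewrite /s ler_pdivrMr // mul1r.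
  pose y0 := s%:C%C *: (app A x0 - P (app A x0)).
  exists (pert ip1 A x0 (y0 - app A x0)); split.
  + exact: pert_dense.
  + exact: pert_closed.
  + apply: (pert_minatt Hi1 Hi2 lA hx0 nx0) => [x hx ox|x hx].
      have hW : W (app A x) by exists x.
      by rewrite /y0 (ipZl Hi2) (proj_orth Hi2 sW pW _ hW) mulr0.
    have ny0 : ipnorm ip2 y0 <= m.
      rewrite /y0 (nrR Hi2 _ s0) -sa ler_wpM2l //.
      exact: (nr_projc_le Hi2 sW pW).
    apply: le_trans (hm x hx); rewrite ler_wpM2r ?nr_ge0 //.
  + apply: le_lt_trans (pert_gap Hi1 Hi2 C1 C2 x0 (y0 - app A x0) hA cA) _.
    rewrite nx0 mul1r.
    have [x' [hx' [o' eP]]] := projM Hi2 sW pW (app A x0).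
    set b2 := n2 ip2 (P (app A x0)).
    have hb2 : b2 = complex.Re (ip2 (app A x0) (P (app A x0))) := proj_n2 Hi2 sW pW (app A x0).
    have na : n2 ip2 (app A x0) = a ^+ 2 by rewrite -(nr_sq Hi2).
    have n1 : n2 ip1 x0 = 1 by rewrite -(nr_sq Hi1) nx0 expr1n.
    have r0 : complex.Re (ip1 x0 x') = 0 by rewrite (Re_ipC Hi1) o'; reflexivity.
    have nAx' : n2 ip2 (app A x') = b2 by rewrite /b2 eP.
    have rAx' : complex.Re (ip2 (app A x0) (app A x')) = b2 by rewrite hb2 eP.
    have q : forall t : R, 0 <= (a ^+ 2 - m ^+ 2) + 2 * t * b2 + t ^+ 2 * (b2 - m ^+ 2 * n2 ip1 x').
      move=> t.
      have hd : dom A (x0 + t%:C%C *: x') := domD lA hx0 (domZ lA _ hx').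
      have := hm2 Hi1 Hi2 m0 hm hd.
      rewrite (AD lA hx0 (domZ lA _ hx')) (AZ lA _ hx').
      rewrite (n2D Hi1) (n2D Hi2) (n2R Hi1) (n2R Hi2) (Re_ipRr Hi1) (Re_ipRr Hi2).
      rewrite r0 n1 na nAx' rAx' => h.
      nra.
    have hc : 0 <= b2 - m ^+ 2 * n2 ip1 x'.
      by rewrite subr_ge0 -nAx'; exact: (hm2 Hi1 Hi2 m0 hm hx').
    have hd := disc hc q.
    have b20 : 0 <= b2 := n2_ge0 Hi2 _.
    have nx'0 : 0 <= n2 ip1 x' := n2_ge0 Hi1 _.
    have am2 : 0 <= a ^+ 2 - m ^+ 2 by nra.
    have hb : b2 <= a ^+ 2 - m ^+ 2.
      have [->|bn0] := eqVneq b2 0; first by [].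
      have bp : 0 < b2 by rewrite lt_def bn0 b20.
      have XY : 0 <= (a ^+ 2 - m ^+ 2) * (m ^+ 2 * n2 ip1 x') by rewrite mulr_ge0 ?mulr_ge0 ?sqr_ge0.
      rewrite mulrBr in hd.
      have : b2 * b2 <= b2 * (a ^+ 2 - m ^+ 2).
        rewrite -expr2 [b2 * _]mulrC; lra.
      by rewrite ler_pM2l.
    have hb' : b2 <= e ^+ 2 by nra.
    have nb : ipnorm ip2 (P (app A x0)) <= e.
      apply: sq_le; [exact: nr_ge0|exact: ltW|]; rewrite (nr_sq Hi2); exact: hb'.
    have t1 : ipnorm ip2 (y0 - s%:C%C *: app A x0) <= e.
      rewrite /y0 scalerBr addrAC subrr add0r (nrN Hi2) (nrR Hi2 _ s0).
      have := nr_ge0 ip2 (P (app A x0)); nra.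
    have t2 : ipnorm ip2 (s%:C%C *: app A x0 - app A x0) = a - m.
      have -> : s%:C%C *: app A x0 - app A x0 = - ((1 - s)%:C%C *: app A x0).
        by rewrite rmorphB rmorph1 scalerBl scale1r opprB.
      rewrite (nrN Hi2) (nrR Hi2); last by lra.
      by rewrite mulrBl mul1r sa.
    have := nr_tri Hi2 y0 (s%:C%C *: app A x0) (app A x0).
    rewrite t2 => t3.
    lra.
Qed.
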